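(* Let $X$ be a real Banach space with a normalized Schauder basis $\mathcal B=(e_n)_{n=1}^\infty$ with biorthogonal functionals $(e_n^* )$, and let $\mathcal E=(\varepsilon_n)_{n=1}^\infty$ be a sequence of nonnegative numbers such that the brick $K=K_{\mathcal B,\mathcal E}$ is compact. Then $r^{\rm ext}(K)$, $r^{\rm unc}(K)$ and $\sup_{x\in K}\|x\|$ are all finite and equal.
   Context: The brick is $K_{\mathcal B,\mathcal E}=\{x\in X:\ |e_n^*(x)|\le\varepsilon_n \text{ for all } n\}$. A point $x_0\in A$ is an extreme point of $A$ if for every nonzero $x\in X$ there is $\lambda\in[-1,1]$ with $x_0+\lambda x\notin A$. The extreme radius $r^{\rm ext}(K)$ is the supremum of $\|x_0\|$ over extreme points of $K$ if one exists, and $\infty$ otherwise. The unconditional radius is $r^{\rm unc}(K)=\sup_{\theta_n=\pm1}\|\sum_{n=1}^\infty\theta_n\varepsilon_ne_n\|$, with the norm of a divergent series equal to $\infty$. *)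

(* Defs.v *)
From HB Require Import structures.
From mathcomp Require Import all_boot all_order all_algebra.
From mathcomp Require Import all_classical all_reals all_analysis.
Set Implicit Arguments. Unset Strict Implicit. Unset Printing Implicit Defensive.
Import Order.TTheory GRing.Theory Num.Theory.
Import numFieldNormedType.Exports.
Local Open Scope classical_set_scope.
Local Open Scope ring_scope.

Section Brick.
Variables (R : realType) (X : completeNormedModType R).

Definition psum (a : nat -> R) (e : nat -> X) : nat -> X :=
  fun N => \sum_(0 <= n < N) a n *: e n.

(* (e_n) is a Schauder basis of X and es n = e_n^* are its coordinate
   (biorthogonal) functionals: every x is sum_n e_n^*(x) e_n, and the
   coefficients of such an expansion are unique. *)
Definition schauder_basis (e : nat -> X) (es : nat -> X -> R) : Prop :=
  (forall x : X, psum (fun n => es n x) e @ \oo --> x) /\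
  (forall (x : X) (a : nat -> R), psum a e @ \oo --> x ->
     forall n, a n = es n x).

Definition normalized (e : nat -> X) : Prop := forall n, `|e n| = 1.

Definition brick (es : nat -> X -> R) (eps : nat -> R) : set X :=
  [set x | forall n, `|es n x| <= eps n].

Definition extreme_point (A : set X) (x0 : X) : Prop :=
  A x0 /\ forall x : X, x != 0 ->
    exists lam : R, -1 <= lam <= 1 /\ ~ A (x0 + lam *: x).

Definition r_ext (A : set X) : \bar R :=
  if `[< exists x, extreme_point A x >]
  then ereal_sup [set (`|x|)%:E | x in extreme_point A]
  else +oo%E.

Definition series_norm (a : nat -> R) (e : nat -> X) : \bar R :=
  if `[< cvg (psum a e @ \oo) >] then (`|lim (psum a e @ \oo)|)%:E
  else +oo%E.

Definition is_sign_seq (theta : nat -> R) : Prop :=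
  forall n, theta n = 1 \/ theta n = -1.

Definition r_unc (e : nat -> X) (eps : nat -> R) : \bar R :=
  ereal_sup [set series_norm (fun n => theta n * eps n) e
            | theta in is_sign_seq].

Definition sup_norm (A : set X) : \bar R :=
  ereal_sup [set (`|x|)%:E | x in A].

End Brick.

(* Main.v *)
Require Import Defs.
From HB Require Import structures.
From mathcomp Require Import all_boot all_order all_algebra.
From mathcomp Require Import all_classical all_reals all_analysis.
From mathcomp Require Import ring lra.
Import Order.TTheory GRing.Theory Num.Theory.
Import numFieldNormedType.Exports.
Local Open Scope classical_set_scope.
Local Open Scope ring_scope.

Lemma cauchy_seq_cvg (R : realType) (V : completeNormedModType R) (u : nat -> V) :
  (forall eps, 0 < eps -> exists N, forall m n, (N <= m)%N -> (N <= n)%N -> `|u m - u n| < eps) ->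
  cvg (u @ \oo).
Proof.
move=> H; apply/cauchy_cvgP; apply: cauchy_exP => eps eps0.
have [N HN] := H eps eps0; exists (u N).
exists N => // n /= Nn; rewrite -ball_normE /ball_ /=; exact: HN.
Unshelve. all: by end_near. Qed.

Lemma test_R (R : realType) (u : nat -> R) :
  (forall eps, 0 < eps -> exists N, forall m n, (N <= m)%N -> (N <= n)%N -> `|u m - u n| < eps) ->
  cvg (u @ \oo).
Proof. move=> H; exact: (@cauchy_seq_cvg R R^o). Qed.


Lemma geo_eq (R : realType) I k :
  \sum_(I <= i < I + k) ((2:R)^-1)^+i + 2 * (2^-1)^+(I + k) = 2 * (2^-1)^+I.
Proof.
elim: k => [|k IH]; first by rewrite addn0 big_geq ?add0r.
rewrite addnS big_nat_recr /=; last by rewrite leq_addr.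
rewrite -IH -addrA; congr (_ + _).
rewrite exprS; set t := (_ ^+ _); field.
by [].

Qed.

Lemma geo_le (R : realType) I J : (I <= J)%N ->
  \sum_(I <= i < J) ((2:R)^-1)^+i <= 2 * (2^-1)^+I.
Proof.
move=> IJ; rewrite -(subnKC IJ) -(geo_eq R I (J - I)) lerDl.
by rewrite mulr_ge0 // exprn_ge0 // invr_ge0.
Qed.

Lemma geo_cvg0 (R : realType) (A : R) : (fun I => A * ((2:R)^-1)^+I) @ \oo --> 0.
Proof.
rewrite -(mulr0 A); apply: cvgMr; apply: cvg_expr.
by rewrite ger0_norm ?invr_ge0 // invf_lt1 // ltr1n.
Qed.

Lemma cauchy_bound (R : realType) (V : completeNormedModType R) (u : nat -> V) (b : nat -> R) :
  b @ \oo --> 0 -> (forall I J, (I <= J)%N -> `|u J - u I| <= b I) -> cvg (u @ \oo).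
Proof.
move=> b0 H; apply: cauchy_seq_cvg => eps eps0.
have /cvgr_dist_lt /(_ (eps / 2)) : b @ \oo --> 0 by [].
move=> /(_ ltac:(by rewrite divr_gt0)) [N _ HN].
exists N => m n Nm Nn.
have bN : b N < eps / 2.
  by have := HN N (leqnn N); rewrite sub0r normrN => /(le_lt_trans (ler_norm _)).
rewrite -(subrK (u N) (u m)) -addrA (le_lt_trans (ler_normD _ _)) //.
rewrite (splitr eps) ltrD //.
  by rewrite (le_lt_trans (H _ _ Nm)).
by rewrite -opprB normrN (le_lt_trans (H _ _ Nn)).
Qed.

Section Basic.
Variables (R : realType) (X : completeNormedModType R).
Variables (e : nat -> X) (es : nat -> X -> R).
Hypothesis Hexp : forall x : X, psum (fun n => es n x) e @ \oo --> x.
Hypothesis Huniq : forall (x : X) (a : nat -> R), psum a e @ \oo --> x ->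
     forall n, a n = es n x.

Lemma psumD a b N : psum (fun n => a n + b n) e N = psum a e N + psum b e N.
Proof. by rewrite /psum -big_split /=; apply: eq_bigr => i _; rewrite scalerDl. Qed.

Lemma psumZ c a N : psum (fun n => c * a n) e N = c *: psum a e N.
Proof. by rewrite /psum scaler_sumr; apply: eq_bigr => i _; rewrite scalerA. Qed.

Lemma esD n x y : es n (x + y) = es n x + es n y.
Proof.
symmetry; apply: (Huniq (x + y) (fun k => es k x + es k y) _ n).
have -> : psum (fun n => es n x + es n y) e = psum (fun n => es n x) e \+ psum (fun n => es n y) e.
  by apply/funext => N; rewrite psumD.
exact: cvgD.
Qed.

Lemma esZ n c x : es n (c *: x) = c * es n x.
Proof.
symmetry; apply: (Huniq (c *: x) (fun k => c * es k x) _ n).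
have -> : psum (fun n => c * es n x) e = (fun N => c *: psum (fun n => es n x) e N).
  by apply/funext => N; rewrite psumZ.
apply: cvgZ => //; exact: cvg_cst.
Qed.

Lemma es0 n : es n 0 = 0.
Proof. by rewrite -(scale0r (0:X)) esZ mul0r. Qed.

Lemma esN n x : es n (- x) = - es n x.
Proof. by rewrite -scaleN1r esZ mulN1r. Qed.

Lemma esB n x y : es n (x - y) = es n x - es n y.
Proof. by rewrite esD esN. Qed.

Lemma psum_stable a M N : (M <= N)%N -> (forall n, (M <= n)%N -> a n = 0) ->
  psum a e N = psum a e M.
Proof.
move=> MN a0; rewrite /psum (@big_cat_nat _ _ _ M 0 N) //=.
rewrite [X in _ + X]big1_seq ?addr0 // => i /andP[_]; rewrite mem_index_iota => /andP[Mi _].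
by rewrite a0 // scale0r.
Qed.

Lemma es_psum a M n : es n (psum a e M) = if (n < M)%N then a n else 0.
Proof.
pose a' := fun k => if (k < M)%N then a k else 0.
have E : psum a e M = psum a' e M.
  by rewrite /psum; apply: eq_big_nat => i /andP[_ iM]; rewrite /a' iM.
rewrite E -(Huniq (psum a' e M) a') //.
apply: cvg_near_cst; near=> N; apply: psum_stable.
  by near: N; exact: nbhs_infty_ge.
by move=> k Mk; rewrite /a' ltnNge Mk.
Unshelve. all: by end_near. Qed.

Definition P N x := psum (fun n => es n x) e N.

Lemma PD N x y : P N (x + y) = P N x + P N y.
Proof. by rewrite /P -psumD; apply: eq_bigr => i _; rewrite esD. Qed.
Lemma PZ N c x : P N (c *: x) = c *: P N x.
Proof. by rewrite /P -psumZ; apply: eq_bigr => i _; rewrite esZ. Qed.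
Lemma PN N x : P N (- x) = - P N x.
Proof. by rewrite -scaleN1r PZ scaleN1r. Qed.
Lemma PB N x y : P N (x - y) = P N x - P N y.
Proof. by rewrite PD PN. Qed.
Lemma P0 N : P N 0 = 0.
Proof. by rewrite /P /psum big1 // => i _; rewrite es0 scale0r. Qed.
Lemma PS n x : P n.+1 x = P n x + es n x *: e n.
Proof. by rewrite /P /psum big_nat_recr. Qed.

Hypothesis Hnorm : forall n, `|e n| = 1.

Lemma P_sum N m k (f : nat -> X) : P N (\sum_(m <= i < k) f i) = \sum_(m <= i < k) P N (f i).
Proof. exact: (big_morph (P N) (PD N) (P0 N)). Qed.

Lemma es_bound n x c : (forall N, `|P N x| <= c) -> `|es n x| <= 2 * c.
Proof.
move=> H; have : es n x *: e n = P n.+1 x - P n x by rewrite PS addrC addKr.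
move/(congr1 (@Num.norm _ X)); rewrite normrZ Hnorm mulr1 => ->.
by rewrite (le_trans (ler_normB _ _)) // mulr2n mulrDl mul1r lerD.
Qed.


Lemma lim_psum_seq (f : nat -> nat -> R) (a : nat -> R) N :
  (forall n, f n @ \oo --> a n) ->
  (fun I => psum (f^~ I) e N) @ \oo --> psum a e N.
Proof.
move=> Hf; elim: N => [|N IH].
  rewrite /psum big_geq //; under eq_fun do rewrite big_geq //; exact: cvg_cst.
rewrite /psum big_nat_recr //=.
under eq_fun do rewrite big_nat_recr //=.
apply: cvgD; first exact: IH.
apply: cvgZ; first exact: Hf.
exact: cvg_cst.
Qed.

Lemma CL (y : nat -> X) (A : R) (z : X) :
  (forall i N, `|P N (y i)| <= A * (2^-1)^+i) ->
  (fun I => \sum_(0 <= i < I) y i) @ \oo --> z ->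
  forall N, `|P N z| <= 2 * A.
Proof.
move=> Hy Hw.
set w := fun I => \sum_(0 <= i < I) y i.
set g := fun I : nat => A * ((2:R)^-1)^+I.
have g0 : g @ \oo --> 0 by exact: geo_cvg0.
have A0 : 0 <= A by have := Hy 0%N 0%N; rewrite expr0 mulr1; apply: le_trans.
have D : forall I J N, (I <= J)%N -> `|P N (w J) - P N (w I)| <= 2 * g I.
  move=> I J N IJ; rewrite -PB /w (@big_cat_nat _ _ _ I 0 J) //= addrAC subrr add0r P_sum.
  rewrite (le_trans (ler_norm_sum _ _ _)) // (le_trans (ler_sum _ (fun i _ => Hy i N))) //.
  rewrite -mulr_sumr /g mulrCA ler_wpM2l //; first exact: geo_le.
have Ca : forall n, cvg ((fun I => es n (w I)) @ \oo).
  move=> n; apply: (@cauchy_bound _ R^o _ (fun I => 2 * (2 * g I))).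
    by rewrite -(mulr0 2) -(mulr0 2); apply: cvgMr; apply: cvgMr.
  move=> I J IJ; rewrite -esB; apply: es_bound => N; rewrite PB; exact: D.
set a := fun n => lim ((fun I => es n (w I)) @ \oo).
set v := fun N => psum a e N.
have Pv : forall N, (fun I => P N (w I)) @ \oo --> v N.
  by move=> N; apply: lim_psum_seq => n; exact: (Ca n).
have Dv : forall I N, `|v N - P N (w I)| <= 2 * g I.
  move=> I N; apply: (@cvgr_to_le _ \oo _ R (fun J => `|P N (w J) - P N (w I)|)).
    apply: cvg_norm; apply: cvgB; [exact: Pv | exact: cvg_cst].
  by near=> J; apply: D; near: J; exact: nbhs_infty_ge.
have Cv : cvg (v @ \oo).
  apply: cauchy_seq_cvg => eps eps0.
  have e6 : 0 < eps / 6 by rewrite divr_gt0.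
  have [I _ HI] : \forall t \near \oo, `|0 - g t| < eps / 6 by exact: cvgr_dist_lt.
  have gI : g I < eps / 6.
    by have := HI I (leqnn I); rewrite sub0r normrN => /(le_lt_trans (ler_norm _)).
  have [N0 _ HN0] : \forall t \near \oo, `|w I - P t (w I)| < eps / 6 by apply: cvgr_dist_lt => //; exact: Hexp.
  exists N0 => m n N0m N0n.
  have h1 := Dv I m; have h4 := Dv I n.
  have h2 : `|P m (w I) - w I| < eps / 6 by rewrite distrC; exact: HN0.
  have h3 : `|w I - P n (w I)| < eps / 6 by exact: HN0.
  have t1 := ler_distD (P m (w I)) (v m) (v n).
  have t2 := ler_distD (w I) (P m (w I)) (v n).
  have t3 := ler_distD (P n (w I)) (w I) (v n).
  rewrite distrC in h4.
  have : 2 * g I < eps / 3 by rewrite (@lt_le_trans _ _ (2 * (eps / 6))) ?ltr_pM2l //; lra.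
  lra.
have Hv : v @ \oo --> lim (v @ \oo) by exact: Cv.
set vv := lim (v @ \oo) in Hv.
have Dz : forall I, `|vv - w I| <= 2 * g I.
  move=> I; apply: (@cvgr_to_le _ \oo _ R (fun N => `|v N - P N (w I)|)).
    apply: cvg_norm; apply: cvgB => //; exact: Hexp.
  by near=> N; exact: Dv.
have Hwv : w @ \oo --> vv.
  apply/cvgrPdist_lt => eps eps0.
  have e2 : 0 < eps / 2 by rewrite divr_gt0.
  have [I _ HI] : \forall t \near \oo, `|0 - g t| < eps / 2 by exact: cvgr_dist_lt.
  exists I => // t It /=.
  have := HI t It; rewrite sub0r normrN => /(le_lt_trans (ler_norm _)) gt.
  have := Dz t; lra.
have zv : z = vv by exact: (norm_cvg_unique Hw Hwv).
have Ha : forall n, a n = es n z by move=> n; apply: Huniq; rewrite zv; exact: Hv.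
move=> N.
have -> : P N z = v N by rewrite /P /v /psum; apply: eq_bigr => n _; rewrite Ha.
have := Dv 0%N N; rewrite /w big_geq // P0 subr0 /g expr0 mulr1; exact.
Unshelve. all: by end_near. Qed.

Lemma P_bnd_ex x : exists c : R, forall N, `|P N x| <= c.
Proof.
have : cvgn (fun N => P N x) by apply/cvg_ex; exists x; exact: Hexp.
move/cvg_seq_bounded/ex_bound => /(_ (@globally_properfilter _ setT 0%N Logic.I)) [M HM]; exists M => N; exact: HM.
Qed.

Lemma baire_step : exists k : nat, exists x0 : X, exists r : R, 0 < r /\
  ball x0 r `<=` closure [set y | forall N, `|P N y| <= k%:R].
Proof.
set C := fun k : nat => closure [set y | forall N, `|P N y| <= k%:R].
set O := fun k => ~` C k.
have : ~ (forall i, open (O i) /\ dense (O i)).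
  move=> H; have := Baire H.
  have -> : \bigcap_i O i = set0.
    rewrite -subset0 => x Ox.
    have [c Hc] := P_bnd_ex x.
    have := Ox (Num.truncn `|c|).+1 Logic.I; apply; apply: subset_closure => N.
    apply: (le_trans (Hc N)); apply: (le_trans (ler_norm c)).
    by apply: ltW; exact: truncnS_gt.
  have T0 : (setT : set X) !=set0 by exists 0.
  by move=> /(_ setT T0 openT) [x [_ []]].
move=> /existsNP [k /not_andP [|]].
  by case; rewrite /O; apply: closed_openC; exact: closed_closure.
move=> /denseNE [U0 [ [x /open_nbhs_nbhs /nbhs_ballP [r r0 bxr] ] U0Ok] ].
exists k, x, r; split => // y /bxr U0y.
apply: contrapT => Cy.
have : (U0 `&` O k) y by split.
by rewrite U0Ok.
Qed.

Lemma closure_approx (A : set X) y eta : closure A y -> 0 < eta ->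
  exists a, A a /\ `|y - a| < eta.
Proof.
move=> cy eta0; have [a [Aa]] := cy _ (nbhsx_ballx y _ eta0).
by rewrite -ball_normE /ball_ /= => ya; exists a.
Qed.

Lemma approx : exists C0 : R, 0 <= C0 /\ forall z eta, 0 < eta ->
  exists y, (forall N, `|P N y| <= C0 * `|z|) /\ `|z - y| < eta.
Proof.
have [k [x0 [r [r0 Hb]]]] := baire_step.
have step : forall z eta, `|z| < r -> 0 < eta ->
    exists y, (forall N, `|P N y| <= 2 * k%:R) /\ `|z - y| < eta.
  move=> z eta zr eta0.
  have e2 : 0 < eta / 2 by rewrite divr_gt0.
  have c1 : closure [set y | forall N, `|P N y| <= k%:R] (x0 + z).
    by apply: Hb; rewrite -ball_normE /ball_ /= opprD addrA subrr add0r normrN.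
  have c2 : closure [set y | forall N, `|P N y| <= k%:R] x0.
    by apply: Hb; exact: ballxx.
  have [y1 [Hy1 d1]] := closure_approx _ _ _ c1 e2.
  have [y2 [Hy2 d2]] := closure_approx _ _ _ c2 e2.
  exists (y1 - y2); split.
    move=> N; rewrite PB (le_trans (ler_normB _ _)) //.
    by rewrite mulr2n mulrDl mul1r lerD.
  have -> : z - (y1 - y2) = (x0 + z - y1) - (x0 - y2).
    by rewrite !opprB [RHS]addrC !addrA subrK [z + y2]addrC.
  rewrite (le_lt_trans (ler_normB _ _)) //; lra.
exists (4 * k%:R / r); split.
  apply: divr_ge0; [apply: mulr_ge0 =>//; lra| exact: ltW].
move=> z eta eta0.
have [->|z0] := eqVneq z 0.
  by exists 0; split => [N|]; rewrite ?P0 ?normr0 ?mulr0 ?subr0 ?normr0.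
have nz : 0 < `|z| by rewrite normr_gt0.
set s := r / (2 * `|z|).
have s0 : 0 < s by rewrite divr_gt0 // mulr_gt0.
have sz : s * `|z| = r / 2 by rewrite /s; field; rewrite gt_eqF.
have zr : `|s *: z| < r by rewrite normrZ gtr0_norm // sz; lra.
have [y' [Hy' dy']] := step (s *: z) (eta * s) zr ltac:(by rewrite mulr_gt0).
exists (s^-1 *: y'); split.
  move=> N; rewrite PZ normrZ gtr0_norm ?invr_gt0 //.
  have -> : 4 * k%:R / r * `|z| = s^-1 * (2 * k%:R).
    rewrite /s invf_div; field; rewrite gt_eqF //.
  by rewrite ler_pM2l ?invr_gt0.
have -> : z - s^-1 *: y' = s^-1 *: (s *: z - y').
  by rewrite scalerBr scalerA mulVf ?gt_eqF // scale1r.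
rewrite normrZ gtr0_norm ?invr_gt0 // -(ltr_pM2l s0) mulrA mulfV ?gt_eqF // mul1r mulrC //.
Qed.

Lemma basis_const : exists C : R, 0 <= C /\ forall x N, `|P N x| <= C * `|x|.
Proof.
have [C0 [C00 HC]] := approx.
exists (2 * C0); split; first by rewrite mulr_ge0.
move=> z N.
have [->|z0] := eqVneq z 0; first by rewrite P0 !normr0 mulr0.
have nz : 0 < `|z| by rewrite normr_gt0.
have Ar : forall p : nat * X, exists y, (forall N, `|P N y| <= C0 * `|p.2|) /\
    `|p.2 - y| < `|z| * (2^-1)^+(p.1.+1).
  move=> [i u]; apply: HC; rewrite mulr_gt0 // exprn_gt0 // invr_gt0 //.
have [f Hf] := choice Ar.
pose fix zs i := if i is j.+1 then zs j - f (j, zs j) else z.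
pose y i := f (i, zs i).
have Zb : forall i, `|zs i| <= `|z| * (2^-1)^+i.
  elim=> [|i IH]; first by rewrite expr0 mulr1.
  by apply: ltW; exact: (proj2 (Hf (i, zs i))).
have Yb : forall i N, `|P N (y i)| <= (C0 * `|z|) * (2^-1)^+i.
  move=> i M; apply: (le_trans (proj1 (Hf (i, zs i)) M)) => /=.
  by rewrite -mulrA ler_wpM2l.
have Sum : forall I, \sum_(0 <= i < I) y i = z - zs I.
  elim=> [|I IH]; first by rewrite big_geq // subrr.
  by rewrite big_nat_recr //= IH opprB addrA addrAC.
have conv : (fun I => \sum_(0 <= i < I) y i) @ \oo --> z.
  apply/cvgrPdist_lt => eps eps0.
  have [I _ HI] : \forall t \near \oo, `|0 - `|z| * (2^-1)^+t| < eps.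
    by apply: cvgr_dist_lt => //; exact: geo_cvg0.
  exists I => // t It /=; rewrite Sum opprB addrC subrK.
  apply: (le_lt_trans (Zb t)); have := HI t It.
  by rewrite sub0r normrN => /(le_lt_trans (ler_norm _)).
have := CL y (C0 * `|z|) z Yb conv N.
by rewrite mulrA.
Qed.

Lemma es_cont : exists C : R, 0 <= C /\ forall n x, `|es n x| <= C * `|x|.
Proof.
have [C [C0 HC]] := basis_const.
exists (2 * C); split; first by rewrite mulr_ge0.
by move=> n x; rewrite -mulrA; apply: es_bound => N; exact: HC.
Qed.

Lemma small_eq0 (C d : R) : 0 <= C -> (forall eta, 0 < eta -> `|d| <= C * eta) -> d = 0.
Proof.
move=> C0 H; apply/eqP; rewrite -normr_eq0; apply/negPn/negP => dn0.
have dp : 0 < `|d| by rewrite normr_gt0 -normr_eq0.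
have eta0 : 0 < `|d| / (2 * (C + 1)) by rewrite divr_gt0 // mulr_gt0 //; lra.
have := H _ eta0.
have : C * (`|d| / (2 * (C + 1))) <= `|d| / 2.
  rewrite mulrA ler_pdivrMr; last by rewrite mulr_gt0 //; lra.
  rewrite mulrAC ler_pdivlMr //; nra.
lra.
Qed.

Variables (eps : nat -> R).
Hypothesis Heps : forall n, 0 <= eps n.
Hypothesis Hcomp : compact (brick es eps).

Definition tseq (th : nat -> R) := psum (fun n => th n * eps n) e.

Lemma sign_abs th n : is_sign_seq th -> `|th n * eps n| = eps n.
Proof. by move=> /(_ n) [->|->]; rewrite ?mul1r ?mulN1r ?normrN ger0_norm. Qed.

Lemma tseq_K th N : is_sign_seq th -> brick es eps (tseq th N).
Proof.
move=> sth n; rewrite /tseq es_psum; case: ifP => _; first by rewrite sign_abs.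
by rewrite normr0.
Qed.

Lemma tseq_cvg th : is_sign_seq th -> cvg (tseq th @ \oo).
Proof.
move=> sth.
have [C [C0 HC]] := es_cont.
have FK : (tseq th @ \oo) (brick es eps) by exists 0%N => // N _; exact: tseq_K.
have [x [Kx clx]] := Hcomp _ _ FK.
have Hx : forall n, es n x = th n * eps n.
  move=> n; apply/eqP; rewrite -subr_eq0; apply/eqP; apply: (@small_eq0 C _ C0) => eta eta0.
  have FA : (tseq th @ \oo) (tseq th @` [set M | (n < M)%N]).
    by exists n.+1 => // M nM; exists M.
  have [_ [[M nM <-]]] := clx _ _ FA (nbhsx_ballx x _ eta0).
  rewrite -ball_normE /ball_ /= => dM.
  have : es n (tseq th M) = th n * eps n by rewrite /tseq es_psum nM.
  move=> <-; rewrite -esB (le_trans (HC _ _)) // ler_wpM2l // ltW //.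
have -> : tseq th = fun N => P N x.
  by apply/funext => N; rewrite /tseq /P /psum; apply: eq_bigr => n _; rewrite Hx.
by apply/cvg_ex; exists x; exact: Hexp.
Unshelve. all: by end_near. Qed.

Definition xs th := lim (tseq th @ \oo).

Lemma xs_cvg th : is_sign_seq th -> tseq th @ \oo --> xs th.
Proof. by move=> /tseq_cvg. Qed.

Lemma es_xs th n : is_sign_seq th -> es n (xs th) = th n * eps n.
Proof. by move=> /xs_cvg H; rewrite (Huniq _ _ H). Qed.

Lemma xs_K th : is_sign_seq th -> brick es eps (xs th).
Proof. by move=> sth n; rewrite es_xs // sign_abs. Qed.

Lemma series_norm_xs th : is_sign_seq th ->
  series_norm (fun n => th n * eps n) e = (`|xs th|)%:E.
Proof. by move=> /tseq_cvg H; rewrite /series_norm asboolT. Qed.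

Lemma es_e m n : es m (e n) = if m == n then 1 else 0.
Proof.
have -> : e n = psum (fun k => if k == n then 1 else 0) e n.+1.
  rewrite /psum big_nat_recr //= eqxx scale1r big1_seq ?add0r // => i.
  by rewrite mem_index_iota => /andP[_ /ltn_eqF ->]; rewrite scale0r.
rewrite es_psum; case: ifP => //; rewrite ltnS => /negbT; rewrite -ltnNge.
by move=> /gtn_eqF ->.
Qed.

Lemma es_inj0 w : (forall n, es n w = 0) -> w = 0.
Proof.
move=> H; have := Hexp w.
have -> : psum (fun n => es n w) e = fun _ => 0.
  by apply/funext => N; rewrite /psum big1 // => i _; rewrite H scale0r.
move=> H0; apply: (norm_cvg_unique H0); exact: cvg_cst.
Qed.

Lemma ext_xs th : is_sign_seq th -> extreme_point (brick es eps) (xs th).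
Proof.
move=> sth; split; first exact: xs_K.
move=> w w0.
have [n wn] : exists n, es n w != 0.
  apply: contrapT => H; move/eqP: w0; apply; apply: es_inj0 => n.
  by case: (eqVneq (es n w) 0) => // wn; exfalso; apply: H; exists n.
set t := th n * es n w.
have th2 : th n * th n = 1 by case: (sth n) => ->; rewrite ?mulr1 ?mulrNN ?mulr1.
have t0 : t != 0 by rewrite mulf_neq0 //; case: (sth n) => ->; rewrite ?oppr_eq0 oner_eq0.
exists (if 0 < t then 1 else -1); split.
  by case: ifP => _; apply/andP; split; lra.
move=> /(_ n); rewrite esD esZ es_xs //.
have -> : `|th n * eps n + (if 0 < t then 1 else -1) * es n w| =
          `|eps n + (if 0 < t then 1 else -1) * t|.
  have thn : `|th n| = 1 by case: (sth n) => ->; rewrite ?normrN normr1.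
  rewrite -[LHS]mul1r -thn -normrM mulrDr mulrA th2 mul1r.
  by rewrite /t mulrCA.
have lt : 0 < (if 0 < t then 1 else -1) * t.
  case: ifP => [|/negbT]; first by rewrite mul1r.
  by rewrite -leNgt mulN1r oppr_gt0 => tle; rewrite lt_neqAle t0 tle.
rewrite ger0_norm; last by rewrite addr_ge0 // ltW.
by move: lt; set q := (if _ then _ else _) * t; lra.

Qed.

Lemma ext_inv x : extreme_point (brick es eps) x ->
  exists th, is_sign_seq th /\ x = xs th.
Proof.
move=> [Kx Hx].
have Hn : forall n, `|es n x| = eps n.
  move=> n; apply/eqP; rewrite eq_le Kx /= leNgt; apply/negP => lt.
  set d := eps n - `|es n x|.
  have d0 : 0 < d by rewrite /d subr_gt0.
  have dn : d *: e n != 0 by rewrite -normr_eq0 normrZ Hnorm mulr1 gtr0_norm // gt_eqF.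
  have [lam [lam1 nK]] := Hx _ dn; apply: nK => m.
  rewrite esD !esZ es_e; case: eqP => [->|_]; last by rewrite !mulr0 addr0 Kx.
  rewrite mulr1 (le_trans (ler_normD _ _)) // normrM (gtr0_norm d0).
  have : `|lam| <= 1 by rewrite ler_norml.
  move=> l1; have : `|lam| * d <= d by rewrite ler_piMl // ltW.
  rewrite /d; lra.
pose th n : R := if es n x < 0 then -1 else 1.
have sth : is_sign_seq th by move=> n; rewrite /th; case: ifP; [right|left].
have Eth : forall n, th n * eps n = es n x.
  move=> n; rewrite -Hn /th; case: ifP => h.
    by rewrite ltr0_norm // mulN1r opprK.
  by rewrite ger0_norm ?mul1r // leNgt h.
exists th; split => //.
have E : tseq th = fun N => P N x.
  by apply/funext => N; rewrite /tseq /P /psum; apply: eq_bigr => n _; rewrite Eth.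
have := xs_cvg th sth; rewrite E => H.
exact: (norm_cvg_unique (Hexp x) H).
Qed.

Lemma sign_fin_bound t : (forall th, is_sign_seq th -> `|xs th| <= t) ->
  forall th M, is_sign_seq th -> `|psum (fun n => th n * eps n) e M| <= t.
Proof.
move=> Ht th M sth.
pose th' n : R := if (n < M)%N then th n else - th n.
have sth' : is_sign_seq th'.
  move=> n; rewrite /th'; case: ifP => _; first exact: sth.
  by case: (sth n) => ->; [right | left; rewrite opprK].
set c := psum (fun n => th n * eps n) e M.
have E : forall N, (M <= N)%N -> tseq th N + tseq th' N = 2 *: c.
  move=> N MN; rewrite /tseq -psumD (psum_stable _ M N) //; last first.
    by move=> n Mn; rewrite /th' ltnNge Mn /= mulNr addrN.
  rewrite /c -psumZ /psum; apply: eq_big_nat => n /andP[_ nM].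
  by rewrite /th' nM; congr (_ *: _); lra.
have H1 : (fun N => tseq th N + tseq th' N) @ \oo --> xs th + xs th'.
  by apply: cvgD; exact: xs_cvg.
have H2 : (fun N => tseq th N + tseq th' N) @ \oo --> 2 *: c.
  by apply: cvg_near_cst; exists M => // N; exact: E.
have E2 := norm_cvg_unique H1 H2.
have : `|2 *: c| <= 2 * t.
  by rewrite -E2 (le_trans (ler_normD _ _)) // mulr2n mulrDl mul1r lerD // Ht.
by rewrite normrZ ger0_norm //; lra.
Qed.

Lemma fin_bound t M :
  (forall th, is_sign_seq th -> `|psum (fun n => th n * eps n) e M| <= t) ->
  forall b, (forall n, `|b n| <= eps n) -> `|psum b e M| <= t.
Proof.
move=> Hs.
suff Q : forall k b, (forall n, `|b n| <= eps n) ->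
    (forall n, (k <= n)%N -> (n < M)%N -> b n = eps n \/ b n = - eps n) ->
    `|psum b e M| <= t.
  move=> b Hb; apply: (Q M b Hb) => n Mn nM.
  by move: nM; rewrite ltnNge Mn.
elim=> [|k IH] b Hb Hs'.
  pose th n : R := if (n < M)%N then (if b n == eps n then 1 else -1) else 1.
  have sth : is_sign_seq th.
    by move=> n; rewrite /th; case: ifP => _; [case: ifP => _; [left|right]|left].
  have -> : psum b e M = psum (fun n => th n * eps n) e M.
    rewrite /psum; apply: eq_big_nat => n /andP[_ nM]; rewrite /th nM.
    case: eqP => [->|ne]; first by rewrite mul1r.
    by case: (Hs' n (leq0n n) nM) => // ->; rewrite mulN1r.
  exact: Hs.
pose b1 n := if n == k then eps k else b n.
pose b2 n := if n == k then - eps k else b n.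
have Hb1 : forall n, `|b1 n| <= eps n.
  by move=> n; rewrite /b1; case: eqP => [->|_]; [rewrite ger0_norm ?Heps | exact: Hb].
have Hb2 : forall n, `|b2 n| <= eps n.
  by move=> n; rewrite /b2; case: eqP => [->|_]; [rewrite normrN ger0_norm ?Heps | exact: Hb].
have Hs1 : forall n, (k <= n)%N -> (n < M)%N -> b1 n = eps n \/ b1 n = - eps n.
  move=> n kn nM; rewrite /b1; case: eqP => [->|nk]; first by left.
  by apply: Hs' => //; rewrite ltn_neqAle kn andbT; apply/eqP => kn'; apply: nk.
have Hs2 : forall n, (k <= n)%N -> (n < M)%N -> b2 n = eps n \/ b2 n = - eps n.
  move=> n kn nM; rewrite /b2; case: eqP => [->|nk]; first by right.
  by apply: Hs' => //; rewrite ltn_neqAle kn andbT; apply/eqP => kn'; apply: nk.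
have t1 := IH b1 Hb1 Hs1.
have t2 := IH b2 Hb2 Hs2.
have bk := Hb k; rewrite ler_norml in bk; case/andP: bk => bk1 bk2.
have [ek0|ek0] := eqVneq (eps k) 0.
  have -> : psum b e M = psum b1 e M.
    rewrite /psum; apply: eq_bigr => n _; rewrite /b1; case: eqP => [->|//].
    by congr (_ *: _); move: bk1 bk2; rewrite ek0; lra.
  exact: t1.
have ekp : 0 < eps k by rewrite lt_neqAle eq_sym ek0 Heps.
set tau := (eps k + b k) / (2 * eps k).
have tau0 : 0 <= tau by rewrite /tau divr_ge0 //; lra.
have tau1 : tau <= 1 by rewrite /tau ler_pdivrMr; lra.
have -> : psum b e M = tau *: psum b1 e M + (1 - tau) *: psum b2 e M.
  rewrite -!psumZ -psumD /psum; apply: eq_bigr => n _; congr (_ *: _).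
  rewrite /b1 /b2; case: eqP => [->|_]; last by ring.
  by rewrite /tau; field; rewrite gt_eqF.
rewrite (le_trans (ler_normD _ _)) // normrZ (ger0_norm tau0) normrZ ger0_norm; last lra.
have : tau * `|psum b1 e M| <= tau * t by rewrite ler_wpM2l.
have : (1 - tau) * `|psum b2 e M| <= (1 - tau) * t by rewrite ler_wpM2l //; lra.
lra.
Qed.

Lemma K_bound t : (forall th, is_sign_seq th -> `|xs th| <= t) ->
  forall x, brick es eps x -> `|x| <= t.
Proof.
move=> Ht x Kx.
have HM : forall M, `|P M x| <= t.
  by move=> M; apply: (fin_bound t M (fun th sth => sign_fin_bound t Ht th M sth)) => n; exact: Kx.
apply: (@cvgr_to_le _ \oo _ R (fun M => `|P M x|)); first by apply: cvg_norm; exact: Hexp.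
by exists 0%N => // M _; exact: HM.
Qed.

Lemma main_res : exists r : R,
    [/\ r_ext (brick es eps) = r%:E,
        r_unc e eps = r%:E &
        sup_norm (brick es eps) = r%:E].
Proof.
set A2 := [set series_norm (fun n => theta n * eps n) e | theta in @is_sign_seq R].
have one : is_sign_seq (fun _ : nat => (1:R)) by left.
have K0 : brick es eps 0 by move=> n; rewrite es0 normr0.
have [M HM] : exists M : R, forall x, brick es eps x -> `|x| <= M.
  have := compact_bounded Hcomp.
  move/ex_bound => /(_ (@globally_properfilter _ _ 0 K0)) [M HM].
  by exists M => x Kx; exact: HM.
have A2M : forall y, A2 y -> (0 <= y /\ y <= M%:E)%E.
  move=> y [th sth <-]; rewrite series_norm_xs // !lee_fin normr_ge0; split => //.
  exact/HM/xs_K.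
have S0 : (0 <= ereal_sup A2)%E.
  apply: (le_trans (proj1 (A2M _ _))); last apply: ereal_sup_ubound; by exists (fun _ => 1).
have SM : (ereal_sup A2 <= M%:E)%E by apply: ge_ereal_sup => y /A2M [].
have [s Ss] : exists s : R, ereal_sup A2 = s%:E.
  by move: S0 SM; case: (ereal_sup A2) => [s _ _|//|//]; exists s.
have xsS : forall th, is_sign_seq th -> `|xs th| <= s.
  move=> th sth; rewrite -lee_fin -Ss -series_norm_xs //.
  by apply: ereal_sup_ubound; exists th.
exists s; split => //.
- rewrite /r_ext asboolT; last by exists (xs (fun _ => 1)); exact: ext_xs.
  rewrite -Ss; congr ereal_sup; apply/seteqP; split => y.
    by move=> [x /ext_inv [th [sth ->]] <-]; exists th => //; rewrite series_norm_xs.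
  by move=> [th sth <-]; exists (xs th); [exact: ext_xs | rewrite series_norm_xs].
- apply/le_anti/andP; split.
    by apply: ge_ereal_sup => y [x Kx <-]; rewrite lee_fin; exact: K_bound.
  rewrite -Ss; apply: ereal_sup_le => y [th sth <-].
  by exists (xs th); [exact: xs_K | rewrite series_norm_xs].
Qed.

End Basic.

Theorem corollary3p8 (R : realType) (X : completeNormedModType R)
  (e : nat -> X) (es : nat -> X -> R) (eps : nat -> R) :
  schauder_basis e es -> normalized e ->
  (forall n, 0 <= eps n) ->
  compact (brick es eps) ->
  exists r : R,
    [/\ r_ext (brick es eps) = r%:E,
        r_unc e eps = r%:E &
        sup_norm (brick es eps) = r%:E].
Proof.
move=> [Hexp Huniq] Hnorm Heps Hcomp.
exact: (@main_res R X e es Hexp Huniq Hnorm eps Heps Hcomp).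
Qed.
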